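(* Fix a scenario $i$ and a binary vector $\bar{\boldsymbol{x}}\in\{0,1\}^{\mathcal{J}}$ with $\mathcal{J}^o:=\{j\in\mathcal{J}:\bar x_j=1\}\neq\emptyset$. Let $j_i^*=\arg\max_{j'\in\mathcal{J}^o}u_{ij'}$. Define $$\bar\lambda_i=r_{ij_i^*},\qquad \bar\mu_{ij}=\begin{cases}\big[\max_{j'\in\mathcal{J}^o\setminus\{j_i^*\}}r_{ij'}-\bar\lambda_i\big]_+ & j=j_i^*,\\ 0 & j\in\mathcal{J}\setminus\{j_i^*\},\end{cases}$$ $$\bar\nu_{ij}=\begin{cases}0 & j\in\mathcal{J}^o,\\ \big[r_{ij}-\bar\lambda_i-\sum_{k\in\mathcal{J}:u_{ik}>u_{ij}}\bar\mu_{ik}\big]_+ & j\in\mathcal{J}\setminus\mathcal{J}^o,\end{cases}$$ where $[z]_+=\max\{z,0\}$ and a maximum over the empty set is $-\infty$ (so that $\bar\mu_{ij_i^*}=0$ if $\mathcal{J}^o=\{j_i^*\}$). Then $(\bar\lambda_i,\bar{\boldsymbol\nu}_i,\bar{\boldsymbol\mu}_i)$ is an optimal solution of $\mathrm{[DSP}_i]$ at $\boldsymbol{x}=\bar{\boldsymbol x}$, and the optimal values satisfy $\phi_i(\bar{\boldsymbol x})=r_{ij_i^*}$, equal to the optimal value of $\mathrm{[DSP}_i]$.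
   Context: Let $\mathcal{J}$ be a finite set of options and fix a scenario index $i$. For each $j\in\mathcal{J}$ let $r_{ij}\in\mathbb{R}$ (reward) and $u_{ij}\in\mathbb{R}$ (utility) be given, with the utilities pairwise distinct: $u_{ij}\neq u_{ik}$ for $j\neq k$. For $\boldsymbol x\in\mathbb{R}^{\mathcal{J}}$, the choice subproblem $\mathrm{[SP}_i]$ is the linear program $$\phi_i(\boldsymbol x)=\max_{\boldsymbol y_i}\ \sum_{j\in\mathcal{J}}r_{ij}y_{ij}\ \text{ s.t. }\ \sum_{j\in\mathcal{J}}y_{ij}=1;\ \ y_{ij}\le x_j\ \forall j\in\mathcal{J};\ \ \sum_{j\in\mathcal{J}:u_{ij}<u_{ik}}y_{ij}+x_k\le 1\ \forall k\in\mathcal{J};\ \ y_{ij}\ge 0\ \forall j.$$ Its LP dual $\mathrm{[DSP}_i]$, with variables $\lambda_i\in\mathbb{R}$, $\boldsymbol\nu_i,\boldsymbol\mu_i\in\mathbb{R}_+^{\mathcal{J}}$, is $$\min\ \lambda_i+\sum_{j\in\mathcal{J}}\mu_{ij}+\sum_{j\in\mathcal{J}}(\nu_{ij}-\mu_{ij})x_j\ \text{ s.t. }\ r_{ij}-\lambda_i-\nu_{ij}-\sum_{k\in\mathcal{J}:u_{ik}>u_{ij}}\mu_{ik}\le 0\ \ \forall j\in\mathcal{J},\ \ \boldsymbol\nu_i,\boldsymbol\mu_i\ge 0.$$ *)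

(* Defs.v *)
From HB Require Import structures.
From mathcomp Require Import all_boot all_order all_algebra.
Set Implicit Arguments. Unset Strict Implicit. Unset Printing Implicit Defensive.
Import Order.TTheory GRing.Theory Num.Theory.
Local Open Scope ring_scope.

Section ChoiceLP.
Variables (R : realFieldType) (J : finType).

Definition posp (z : R) : R := Num.max z 0.

Definition SP_feasible (u : J -> R) (x y : J -> R) : Prop :=
  [/\ \sum_(j : J) y j = 1,
      (forall j, y j <= x j),
      (forall k, \sum_(j : J | u j < u k) y j + x k <= 1)
    & (forall j, 0 <= y j)].

Definition SP_obj (r : J -> R) (y : J -> R) : R := \sum_(j : J) r j * y j.

Definition SP_opt_value (r u : J -> R) (x : J -> R) (v : R) : Prop :=
  (exists y, SP_feasible u x y /\ SP_obj r y = v) /\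
  (forall y, SP_feasible u x y -> SP_obj r y <= v).

Definition DSP_feasible (r u : J -> R) (lam : R) (nu mu : J -> R) : Prop :=
  (forall j, r j - lam - nu j - \sum_(k : J | u j < u k) mu k <= 0) /\
  (forall j, 0 <= nu j /\ 0 <= mu j).

Definition DSP_obj (x : J -> R) (lam : R) (nu mu : J -> R) : R :=
  lam + \sum_(j : J) mu j + \sum_(j : J) (nu j - mu j) * x j.

Definition DSP_optimal (r u x : J -> R) (lam : R) (nu mu : J -> R) : Prop :=
  DSP_feasible r u lam nu mu /\
  (forall lam' nu' mu', DSP_feasible r u lam' nu' mu' ->
     DSP_obj x lam nu mu <= DSP_obj x lam' nu' mu').

Definition Jo (xbar : J -> R) : {set J} := [set j | xbar j == 1].

Definition lam_bar (r : J -> R) (jstar : J) : R := r jstar.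

(* max over J^o \ {j*} of r, minus lambda, positive part; max over the empty
   set is -oo, so the value is 0 in that case. For a nonempty set the max is
   seeded with an element of the set (which does not change it). *)
Definition mu_bar (r xbar : J -> R) (jstar : J) (j : J) : R :=
  if j == jstar then
    match [pick j' in Jo xbar :\ jstar] with
    | None => 0
    | Some j0 => posp (\big[Num.max/r j0]_(j' in Jo xbar :\ jstar) r j'
                       - lam_bar r jstar)
    end
  else 0.

Definition nu_bar (r u xbar : J -> R) (jstar : J) (j : J) : R :=
  if j \in Jo xbar then 0
  else posp (r j - lam_bar r jstar
             - \sum_(k : J | u j < u k) mu_bar r xbar jstar k).

End ChoiceLP.

(* Main.v *)
Require Import Defs.
From HB Require Import structures.
From mathcomp Require Import all_boot all_order all_algebra.
From mathcomp Require Import lra.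
Import Order.TTheory GRing.Theory Num.Theory.
Local Open Scope ring_scope.

Lemma sum_single {R : realFieldType} {J : finType} {F : J -> R} {j0 : J}
  (P : pred J) : (forall j, j != j0 -> F j = 0) ->
  \sum_(k | P k) F k = if P j0 then F j0 else 0.
Proof.
move=> H; case: (boolP (P j0)) => Hj.
  rewrite (bigD1 j0) //= big1 ?addr0 // => k /andP [_ ?]; exact: H.
rewrite big1 // => k Pk; apply: H; apply/eqP => E; move: Hj; by rewrite -E Pk.
Qed.

Lemma sum_sub_le {R : realFieldType} {J : finType} {F : J -> R} (P : pred J) :
  (forall j, 0 <= F j) -> \sum_(k | P k) F k <= \sum_k F k.
Proof.
move=> H; rewrite [X in _ <= X](bigID P) /= lerDl; apply: sumr_ge0 => *; exact: H.
Qed.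

Theorem proposition1 (R : realFieldType) (J : finType) (r u : J -> R)
  (u_inj : forall j k : J, j != k -> u j != u k)
  (xbar : J -> R) (xbar_bin : forall j, xbar j = 0 \/ xbar j = 1)
  (Jo_ne : Jo xbar != set0)
  (jstar : J) (jstar_in : jstar \in Jo xbar)
  (jstar_max : forall j', j' \in Jo xbar -> u j' <= u jstar) :
  DSP_optimal r u xbar (lam_bar r jstar) (nu_bar r u xbar jstar)
              (mu_bar r xbar jstar)
  /\ SP_opt_value r u xbar (r jstar)
  /\ DSP_obj xbar (lam_bar r jstar) (nu_bar r u xbar jstar)
             (mu_bar r xbar jstar) = r jstar.
Proof.
set mu := mu_bar r xbar jstar.
set nu := nu_bar r u xbar jstar.
have inJo : forall j, (j \in Jo xbar) = (xbar j == 1) by move=> j; rewrite inE.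
have xs1 : xbar jstar = 1 by apply/eqP; rewrite -inJo.
have x0 : forall j, j \notin Jo xbar -> xbar j = 0.
  move=> j; rewrite inJo; case: (xbar_bin j) => ->; first by [].
  by rewrite eqxx.
have xge0 : forall j, 0 <= xbar j by move=> j; case: (xbar_bin j) => ->.
have xle1 : forall j, xbar j <= 1 by move=> j; case: (xbar_bin j) => ->.
have mu0 : forall j, j != jstar -> mu j = 0.
  by move=> j /negbTE Hj; rewrite /mu /mu_bar Hj.
have posp_ge0 : forall z : R, 0 <= posp z by move=> z; rewrite /posp le_max lexx orbT.
have posp_ge : forall z : R, z <= posp z by move=> z; rewrite /posp le_max lexx.
have mu_ge0 : forall j, 0 <= mu j.
  move=> j; rewrite /mu /mu_bar; case: (j == jstar) => //.
  by case: pickP.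
have nuJo : forall j, j \in Jo xbar -> nu j = 0 by move=> j Hj; rewrite /nu /nu_bar Hj.
have nu_ge0 : forall j, 0 <= nu j.
  by move=> j; rewrite /nu /nu_bar; case: ifP.
have ult : forall j, j \in Jo xbar -> j != jstar -> u j < u jstar.
  move=> j Hj Hne; rewrite lt_neqAle jstar_max // andbT; exact: u_inj.
have notJo : forall k, u jstar < u k -> k \notin Jo xbar.
  move=> k Hk; apply/negP => Hin; have := jstar_max _ Hin.
  by rewrite leNgt Hk.
have objE : DSP_obj xbar (lam_bar r jstar) nu mu = r jstar.
  rewrite /DSP_obj (sum_single (fun _ => true) mu0) /=.
  rewrite (eq_bigr (fun j => - mu j)); last first.
    move=> j _; case: (eqVneq j jstar) => [->|Hne].
      by rewrite nuJo // xs1 mulr1 sub0r.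
    rewrite mu0 // subr0 oppr0; case: (boolP (j \in Jo xbar)) => Hj.
      by rewrite nuJo // mul0r.
    by rewrite x0 // mulr0.
  rewrite sumrN (sum_single (fun _ => true) mu0) /=.
  by rewrite /lam_bar addrK.
have feas : DSP_feasible r u (lam_bar r jstar) nu mu.
  split; last by move=> j; split.
  move=> j; rewrite (sum_single (fun k => u j < u k) mu0) /=.
  case: (boolP (j \in Jo xbar)) => Hj; last first.
    rewrite /nu /nu_bar (negbTE Hj) -/mu (sum_single (fun k => u j < u k) mu0).
    set c := (if _ then _ else _); have := posp_ge (r j - lam_bar r jstar - c); lra.
  rewrite nuJo // subr0.
  case: (eqVneq j jstar) => [->|Hne].
    by rewrite ltxx /lam_bar subrr subr0.
  rewrite ult // /mu /mu_bar eqxx.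
  have HjD : j \in Jo xbar :\ jstar by rewrite !inE Hne -inJo.
  case: pickP => [j0 Hj0|/(_ j)]; last by rewrite HjD.
  rewrite subr_le0; apply: (le_trans _ (posp_ge _)).
  rewrite lerB // ; exact: (le_bigmax_cond _ (P := mem (Jo xbar :\ jstar))).
split.
  split => // lam' nu' mu' [Hf Hnn].
  rewrite objE /DSP_obj -addrA -big_split /=.
  set f := fun j => mu' j + (nu' j - mu' j) * xbar j.
  have fge0 : forall j, 0 <= f j.
    move=> j; rewrite /f; case: (xbar_bin j) => ->.
      by rewrite mulr0 addr0; case: (Hnn j).
    by rewrite mulr1 addrC subrK; case: (Hnn j).
  have Hs := Hf jstar.
  suff: nu' jstar + \sum_(k | u jstar < u k) mu' k <= \sum_j f j by lra.
  rewrite [X in _ <= X](bigD1 jstar) //= {1}/f xs1 mulr1 addrCA subrr addr0 lerD2l.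
  rewrite [X in _ <= X](bigID (fun k => u jstar < u k)) /=.
  apply: ler_wpDr; first by apply: sumr_ge0 => *; exact: fge0.
  rewrite le_eqVlt; apply/orP; left; apply/eqP.
  rewrite [RHS](eq_bigl (fun k => u jstar < u k)); last first.
    move=> k /=; case: (eqVneq k jstar) => [->|//]; by rewrite ltxx.
  apply: eq_bigr => k Hk; by rewrite /f x0 ?notJo // mulr0 addr0.
split; last exact: objE.
pose y := fun j : J => if j == jstar then (1 : R) else 0.
have y0 : forall j, j != jstar -> y j = 0 by move=> j /negbTE H; rewrite /y H.
have ys : y jstar = 1 by rewrite /y eqxx.
split.
  exists y; split; last first.
    rewrite /SP_obj (@sum_single _ _ (fun j => r j * y j) jstar (fun _ => true)) /=.
      by rewrite ys mulr1.
    by move=> j Hj; rewrite y0 // mulr0.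
  split.
  - by rewrite (sum_single (fun _ => true) y0) /= ys.
  - by move=> j; rewrite /y; case: eqP => [->|_]; rewrite ?xs1.
  - move=> k; rewrite (sum_single (fun j => u j < u k) y0) /= ys.
    case: ifP => H; first by rewrite x0 ?notJo // addr0.
    by rewrite add0r.
  - by move=> j; rewrite /y; case: ifP.
move=> y' [H1 H2 H3 H4].
have yz : forall j, j != jstar -> y' j = 0.
  move=> j Hne; apply/eqP; rewrite eq_le H4 andbT.
  case: (boolP (j \in Jo xbar)) => Hj; last by rewrite -(x0 _ Hj).
  have := H3 jstar; rewrite xs1 -{2}(add0r 1) lerD2r => Hsum.
  apply: le_trans Hsum; rewrite (bigD1 j) ?ult //= lerDl.
  by apply: sumr_ge0 => *.
rewrite /SP_obj (@sum_single _ _ (fun j => r j * y' j) jstar (fun _ => true)) /=; last first.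
  by move=> j Hj; rewrite yz // mulr0.
rewrite (sum_single (fun _ => true) yz) /= in H1.
by rewrite H1 mulr1.
Qed.
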